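(* Neither the language $L_{GW}$ of unsigned Gauss words nor the language $L_{SGW}$ of signed Gauss words is recognisable by a non-deterministic one-way register automaton over data words.
   Context: A data word over $\Sigma\times\mathbb N$ ($\Sigma$ finite) is a finite sequence of pairs $(a,n)$ with $a\in\Sigma$, $n\in\mathbb N$; $|w|_s$ denotes the number of occurrences of symbol $s$ in $w$. An unsigned Gauss word is a data word $w$ over $\{U,O\}\times\mathbb N$ such that for every $n$ either $|w|_{(U,n)}=|w|_{(O,n)}=0$ or $|w|_{(U,n)}=|w|_{(O,n)}=1$; $L_{GW}$ is the set of these. A signed Gauss word is a data word $w$ over $\{U^+,O^+,U^-,O^-\}\times\mathbb N$ such that for every $n$ either all counts $|w|_{(U^\pm,n)},|w|_{(O^\pm,n)}$ are $0$, or $|w|_{(U^+,n)}=|w|_{(O^+,n)}=1$ and the $-$ counts are $0$, or $|w|_{(U^-,n)}=|w|_{(O^-,n)}=1$ and the $+$ counts are $0$; $L_{SGW}$ is the set of these. A $k$-register automaton over data words is a tuple $(Q,q_0,F,\tau_0,P)$ with finite state set $Q$, initial state $q_0$, final states $F$, initial register assignment $\tau_0$, and a finite set $P$ of transitions of the forms $(a,i,q)\to(q',d)$ (in state $q$ reading $(a,e)$ with $e$ equal to the content of register $i$: go to $q'$, move in direction $d$) and $(a,q)\to(q',i,d)$ (in state $q$ reading $(a,e)$ with $e$ different from all register contents: go to $q'$, store $e$ in register $i$, move in direction $d$). It is non-deterministic in general (any applicable transition may be chosen) and accepts a word if some run reaches a state of $F$. It is one-way if the head only moves right (directions $d\in\{\mathrm{stay},\mathrm{right}\}$).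 *)

(* Defs.v *)
From HB Require Import structures.
From Stdlib Require List.
From mathcomp Require Import all_boot.
Set Implicit Arguments.
Unset Strict Implicit.
Unset Printing Implicit Defensive.

Definition data_word (Sigma : Type) := seq (Sigma * nat).

Inductive dir := DLeft | DStay | DRight.

(* Transitions of a k-register automaton with state set Q over alphabet Sigma:
   TEq a i q q' d   encodes (a,i,q) -> (q',d)
   TFresh a q q' i d encodes (a,q) -> (q',i,d) *)
Inductive transition (Sigma Q : Type) (k : nat) :=
| TEq of Sigma & 'I_k & Q & Q & dir
| TFresh of Sigma & Q & Q & 'I_k & dir.

Record reg_automaton (Sigma : Type) (k : nat) := RegAutomaton {
  ra_state : finType;
  ra_q0 : ra_state;
  ra_F : {set ra_state};
  ra_tau0 : 'I_k -> nat;
  ra_P : seq (transition Sigma ra_state k)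
}.

Definition move (d : dir) (i : nat) : option nat :=
  match d with
  | DLeft => if i is i'.+1 then Some i' else None
  | DStay => Some i
  | DRight => Some i.+1
  end.

Definition config (Sigma : Type) (k : nat) (A : reg_automaton Sigma k) :=
  (ra_state A * nat * ('I_k -> nat))%type.

Definition step (Sigma : eqType) (k : nat) (A : reg_automaton Sigma k)
  (w : data_word Sigma) (c c' : config A) : Prop :=
  let: (q, i, r) := c in
  let: (q', i', r') := c' in
  exists2 t, List.In t (ra_P A) &
  match t with
  | TEq a j p p' d =>
      [/\ p = q, p' = q', onth w i = Some (a, r j),
          move d i = Some i' & forall l, r' l = r l]
  | TFresh a p p' j d =>
      exists e,
      [/\ p = q, p' = q', onth w i = Some (a, e),
          (forall l, r l <> e) & move d i = Some i'] /\
          (forall l, r' l = (if l == j then e else r l))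
  end.

Inductive reach (Sigma : eqType) (k : nat) (A : reg_automaton Sigma k)
  (w : data_word Sigma) : config A -> config A -> Prop :=
| reach_refl c : reach w c c
| reach_step c1 c2 c3 : step w c1 c2 -> reach w c2 c3 -> reach w c1 c3.

Definition accepts (Sigma : eqType) (k : nat) (A : reg_automaton Sigma k)
  (w : data_word Sigma) : Prop :=
  exists q r, reach w (ra_q0 A, 0, ra_tau0 A) (q, size w, r) /\ q \in ra_F A.

Definition dir_of (Sigma Q : Type) (k : nat) (t : transition Sigma Q k) : dir :=
  match t with TEq _ _ _ _ d => d | TFresh _ _ _ _ d => d end.

Definition one_way (Sigma : Type) (k : nat) (A : reg_automaton Sigma k) : Prop :=
  forall t, List.In t (ra_P A) -> dir_of t <> DLeft.

Definition recognises (Sigma : eqType) (k : nat) (A : reg_automaton Sigma k)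
  (L : data_word Sigma -> Prop) : Prop :=
  forall w, accepts A w <-> L w.

Inductive uo := U | O.
Definition uo_eqb (x y : uo) : bool :=
  match x, y with U, U | O, O => true | _, _ => false end.
Lemma uo_eqP : Equality.axiom uo_eqb.
Proof. by case; case; constructor. Qed.
HB.instance Definition _ := hasDecEq.Build uo uo_eqP.

Inductive suo := Up | Op | Um | Om.
Definition suo_eqb (x y : suo) : bool :=
  match x, y with
  | Up, Up | Op, Op | Um, Um | Om, Om => true | _, _ => false end.
Lemma suo_eqP : Equality.axiom suo_eqb.
Proof. by case; case; constructor. Qed.
HB.instance Definition _ := hasDecEq.Build suo suo_eqP.

Definition L_GW (w : data_word uo) : Prop :=
  forall n : nat,
    (count_mem (U, n) w = 0 /\ count_mem (O, n) w = 0) \/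
    (count_mem (U, n) w = 1 /\ count_mem (O, n) w = 1).

Definition L_SGW (w : data_word suo) : Prop :=
  forall n : nat,
    (count_mem (Up, n) w = 0 /\ count_mem (Op, n) w = 0 /\
     count_mem (Um, n) w = 0 /\ count_mem (Om, n) w = 0) \/
    (count_mem (Up, n) w = 1 /\ count_mem (Op, n) w = 1 /\
     count_mem (Um, n) w = 0 /\ count_mem (Om, n) w = 0) \/
    (count_mem (Um, n) w = 1 /\ count_mem (Om, n) w = 1 /\
     count_mem (Up, n) w = 0 /\ count_mem (Op, n) w = 0).

(* Main.v *)
From Stdlib Require Import FunctionalExtensionality.
Require Import Defs.
From mathcomp Require Import all_boot.
Set Implicit Arguments.
Unset Strict Implicit.
Unset Printing Implicit Defensive.

Section Gen.
Variables (Sigma : eqType) (k : nat) (A : reg_automaton Sigma k).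
Implicit Types w u v : data_word Sigma.
Implicit Types c : config A.

Definition rn (f : nat -> nat) (c : config A) : config A :=
  (c.1.1, c.1.2, fun l => f (c.2 l)).

Lemma step_map w w' f : injective f -> forall c c', step w c c' ->
  (forall p, onth w c.1.2 = Some p -> onth w' c.1.2 = Some (p.1, f p.2)) ->
  step w' (rn f c) (rn f c').
Proof.
move=> injf [[q i] r] [[q' i'] r'] /= [t tP Ht] H; exists t => //.
case: t tP Ht => [a j p p' d | a p p' j d] _.
- by case=> -> -> Hw Hm Hr; split => //; [rewrite (H _ Hw) | move=> l /=; rewrite Hr].
- case=> e [[-> -> Hw Hn Hm] Hr]; exists (f e); split; [split|] => //.
  + by rewrite (H _ Hw).
  + by move=> l /injf; apply: Hn.
  + by move=> l /=; rewrite Hr; case: (l == j).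
Qed.

Lemma step_pos w (c c' : config A) : one_way A -> step w c c' -> c.1.2 <= c'.1.2 <= c.1.2.+1.
Proof.
move=> ow; case: c c' => [[q i] r] [[q' i'] r'] /= [t tP Ht].
have := ow t tP.
case: t tP Ht => [a j p p' d | a p p' j d] _ /=.
- by case=> _ _ _ Hm _; case: d Hm => //= [[<-]|[<-]] _; rewrite ?leqnn ?leqnSn.
- by case=> e [[_ _ _ _ Hm] _]; case: d Hm => //= [[<-]|[<-]] _; rewrite ?leqnn ?leqnSn.
Qed.

Lemma reach_trans w (c1 c2 c3 : config A) : reach w c1 c2 -> reach w c2 c3 -> reach w c1 c3.
Proof.
elim=> // x y z Hs _ IH H; exact: (reach_step Hs (IH H)).
Qed.

Lemma reach_map w w' f m (c c' : config A) : one_way A -> injective f -> reach w c c' ->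
  (forall i p, m <= i -> onth w i = Some p -> onth w' i = Some (p.1, f p.2)) ->
  m <= c.1.2 -> reach w' (rn f c) (rn f c').
Proof.
move=> ow injf; elim=> [x|x y z Hs _ IH] H Hm; first exact: reach_refl.
apply: reach_step (step_map injf Hs _) (IH H _).
- by move=> p; apply: H.
- by case/andP: (step_pos ow Hs) => H1 _; apply: leq_trans H1.
Qed.

Lemma step_id w w' (q q' : ra_state A) (i i' : nat) (r r' : 'I_k -> nat) : step w (q, i, r) (q', i', r') ->
  (forall p, onth w i = Some p -> onth w' i = Some p) -> step w' (q, i, r) (q', i', r').
Proof.
move=> Hs H.
have := @step_map w w' id (fun (a b : nat) (e : id a = id b) => e) _ _ Hs.
by apply => p /H; case: p.
Qed.

Lemma split_run u v (c1 c3 : config A) : one_way A -> reach (u ++ v) c1 c3 ->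
  c1.1.2 <= size u <= c3.1.2 ->
  exists c2, [/\ c2.1.2 = size u, reach u c1 c2 & reach (u ++ v) c2 c3].
Proof.
move=> ow; elim=> [x|x y z Hs Hr IH].
  by move=> H; exists x; split; [apply/eqP; rewrite eqn_leq | apply: reach_refl | apply: reach_refl].
move=> /andP[H1 H2].
case: (ltnP x.1.2 (size u)) => Hl; last first.
  exists x; split; [by apply/eqP; rewrite eqn_leq H1 | apply: reach_refl | exact: reach_step Hs Hr].
have /andP[P1 P2] := step_pos ow Hs.
have [c2 [E pre suf]] := IH (introT andP (conj (leq_trans P2 Hl) H2)).
exists c2; split => //.
apply: reach_step pre.
move: x y Hs Hl {Hr IH H1 P1 P2} => [[q i] r] [[q' i'] r'] Hs /= Hl.
by apply: step_id Hs _ => p /=; rewrite onth_cat Hl.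
Qed.

Lemma reach_inv w e (c c' : config A) : reach w c c' ->
  (forall i p, onth w i = Some p -> p.2 != e) ->
  (forall l, c.2 l != e) -> forall l, c'.2 l != e.
Proof.
elim=> // x y z Hs _ IH Hw Hx; apply: IH => //.
move: x y Hs Hx => [[q i] r] [[q' i'] r'] /= [t _ Ht] Hx l.
case: t Ht => [a j p p' d | a p p' j d].
- by case=> _ _ _ _ ->.
- case=> e0 [[_ _ Hw0 _ _] ->]; case: (l == j) => //.
  exact: (Hw _ _ Hw0).
Qed.

Lemma pigeon (r : 'I_k -> nat) ds : uniq ds -> k < size ds ->
  exists2 y, y \in ds & forall l, r l != y.
Proof.
move=> uds kds.
case H: (has (fun y : nat => y \notin [seq r l | l <- enum 'I_k]) ds).
  case/hasP: H => y yin yn; exists y => // l.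
  by apply: contraNneq yn => <-; apply: map_f; rewrite mem_enum.
move/negbT/hasPn: H => H.
have := uniq_leq_size uds (s2 := [seq r l | l <- enum 'I_k]) (fun (y : nat) yi => negbNE (H y yi)).
by rewrite size_map size_enum_ord leqNgt kds.
Qed.

Definition swapn (a b y : nat) := if y == a then b else if y == b then a else y.

Lemma swapnK a b : involutive (swapn a b).
Proof.
move=> y; rewrite /swapn.
case: (eqVneq y a) => [->|ya]; first by rewrite eqxx; case: (eqVneq b a).
case: (eqVneq y b) => [->|yb]; first by rewrite eqxx.
by rewrite (negbTE ya) (negbTE yb).
Qed.

Lemma core (a b : Sigma) ds e : one_way A -> uniq ds -> k < size ds ->
  e \notin ds -> (forall l, ra_tau0 A l != e) ->
  accepts A (map (pair a) ds ++ map (pair b) ds) ->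
  exists2 x, x \in ds &
    accepts A (map (pair a) ds ++ map (pair b) (map (swapn x e) ds)).
Proof.
move=> ow uds kds eds te [q [r0 [Hr qF]]].
set u := map (pair a) ds; set v := map (pair b) ds.
have Hb : (ra_q0 A, 0, ra_tau0 A).1.2 <= size u <= (q, size (u ++ v), r0).1.2.
  by rewrite /= size_cat leq_addr.
have [[[q2 i2] r2] [/= c2p pre suf]] := split_run ow Hr Hb.
subst i2.
have inv : forall l, r2 l != e.
  apply: (reach_inv pre) => //= i p Hi.
  have : p \in u by apply/onthP; exists i.
  by case/mapP => y yds -> /=; apply: contraNneq eds => <-.
have [x xds xr] := pigeon r2 uds kds.
exists x => //.
exists q, (fun l => swapn x e (r0 l)); split => //.
apply: (reach_trans (c2 := (q2, size u, r2))).
  move: pre; elim => [c|c c' c'' Hs _ IH]; first exact: reach_refl.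
  apply: reach_step IH.
  move: c c' Hs => [[? ?] ?] [[? ?] ?] Hs.
  by apply: step_id Hs _ => p /= Hp; rewrite onth_cat (_ : _ < _) // -onthTE Hp.
have Hsw : injective (swapn x e) := inv_inj (swapnK x e).
have := reach_map (m := size u) ow Hsw suf.
move=> /(_ (u ++ [seq (b, i) | i <- [seq swapn x e i | i <- ds]])).
have E1 : (fun l => swapn x e (r2 l)) = r2.
  apply: functional_extensionality => l.
  by rewrite /swapn (negbTE (xr l)) (negbTE (inv l)).
have E2 : size ([seq (a, i) | i <- ds] ++ [seq (b, i) | i <- ds]) =
   size (u ++ [seq (b, i) | i <- [seq swapn x e i | i <- ds]]).
  by rewrite !size_cat !size_map.
rewrite /rn /= E1 E2; apply => //.
move=> i p Hi; rewrite !onth_cat -/u ltnNge Hi /= !onth_map.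
by case: (onth ds _) => //= y [<-].
Qed.

Lemma mem_pair (a c : Sigma) (y : nat) ds :
  ((c, y) \in map (pair a) ds) = (c == a) && (y \in ds).
Proof.
apply/mapP/andP => [[y' yin [-> ->]]|[/eqP -> yin]]; last by exists y.
by rewrite eqxx.
Qed.

Lemma count_pairs (a b c : Sigma) (y : nat) ds : a != b -> uniq ds ->
  count_mem (c, y) (map (pair a) ds ++ map (pair b) ds) =
  ((c == a) || (c == b)) && (y \in ds).
Proof.
move=> ab uds; rewrite count_uniq_mem ?mem_cat ?mem_pair.
  by case: (y \in ds); rewrite ?andbT ?andbF.
rewrite cat_uniq !map_inj_uniq //; try by move=> ? ? [].
rewrite uds andbT; apply/hasPn => p /mapP [z _ ->].
by rewrite mem_pair negb_and eq_sym ab.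
Qed.

Lemma no_rec (a b : Sigma) (L : data_word Sigma -> Prop) : a != b ->
  one_way A -> recognises A L ->
  (forall ds, uniq ds -> L (map (pair a) ds ++ map (pair b) ds)) ->
  exists w x, [/\ L w, count_mem (a, x) w != 0 & count_mem (b, x) w = 0].
Proof.
move=> ab ow rec HL.
set M := \max_(l : 'I_k) ra_tau0 A l.
set ds := iota M.+2 k.+1.
have uds : uniq ds by apply: iota_uniq.
have kds : k < size ds by rewrite size_iota.
have eds : M.+1 \notin ds by rewrite mem_iota ltnn.
have te : forall l, ra_tau0 A l != M.+1 by move=> l; rewrite neq_ltn ltnS leq_bigmax.
have [x xds acc] := core ow uds kds eds te (proj2 (rec _) (HL ds uds)).
exists ([seq (a, i) | i <- ds] ++ [seq (b, i) | i <- [seq swapn x M.+1 i | i <- ds]]), x.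
split; first exact: (proj1 (rec _) acc).
  by apply/eqP => /count_memPn; rewrite mem_cat mem_pair eqxx xds.
apply/count_memPn; rewrite mem_cat !mem_pair eqxx eq_sym (negbTE ab).
rewrite andFb andTb orFb.
apply/mapP => [[y yds Hy]].
have : y = M.+1 by rewrite -(swapnK x M.+1 y) -Hy /swapn eqxx.
by move=> Ey; move: yds; rewrite Ey mem_iota ltnn.
Qed.

End Gen.

Theorem proposition2 :
  (~ exists (k : nat) (A : reg_automaton uo k), one_way A /\ recognises A L_GW) /\
  (~ exists (k : nat) (A : reg_automaton suo k), one_way A /\ recognises A L_SGW).
Proof.
split; move=> [k [A [ow rec]]].
- have [|ds uds|w [x [Lw c1 c2]]] := @no_rec _ _ A U O L_GW _ ow rec => //.
    move=> y; rewrite !count_pairs //=.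
    by case: (y \in ds); [right|left].
  by case: (Lw x) => [[H _]|[_ H]]; [rewrite H in c1 | rewrite H in c2].
- have [|ds uds|w [x [Lw c1 c2]]] := @no_rec _ _ A Up Op L_SGW _ ow rec => //.
    move=> y; rewrite !count_pairs //=.
    by case: (y \in ds); [right; left|left].
  by case: (Lw x) => [[H _]|[[_ [H _]]|[_ [_ [H _]]]]];
    [rewrite H in c1 | rewrite H in c2 | rewrite H in c1].
Qed.
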